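(* Let $G$ be a graph on vertex set $[n]$. Suppose $v\in[n]$ has three distinct neighbours $R=\{r_1,r_2,r_3\}$ with $\deg(r_i)\geq 2$ for $i=1,2,3$, and assume that no triangle of $G$ contains $v$ and an element of $R$. (i) Then there is a $\triangle^+$-switch $(G,\widetilde{G})$ such that $\widetilde{G}$ contains a triangle $T$ with $v\in T$ and $R\cap T\neq\emptyset$. (ii) Furthermore, such a $\triangle^+$-switch can be chosen with $r_1\in T$, unless for $j=2$ and $j=3$ there is a $5$-cycle in $G$ containing the path $r_1vr_j$ but no $4$-cycle in $G$ contains this path.
   Context: A $\triangle^+$-switch on a graph $G$: given five distinct vertices $b_2,b_1,x,b_3,b_4$ such that $b_2b_1,b_1x,xb_3,b_3b_4$ are edges of $G$ and $b_1b_3$, $b_2b_4$ are non-edges of $G$, the graph $\widetilde{G}$ is obtained by deleting the edges $b_1b_2,b_3b_4$ and inserting the edges $b_1b_3,b_2b_4$ (so $\widetilde{G}$ has the same degree sequence as $G$ and contains the triangle $xb_1b_3$). *)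

(* Defs.v *)
From mathcomp Require Import all_boot.
Set Implicit Arguments. Unset Strict Implicit. Unset Printing Implicit Defensive.

Definition simple_graph (n : nat) (e : rel 'I_n) : Prop :=
  symmetric e /\ irreflexive e.

Definition deg (n : nat) (e : rel 'I_n) (u : 'I_n) : nat := #|[set w | e u w]|.

Definition is_triangle (n : nat) (e : rel 'I_n) (T : {set 'I_n}) : Prop :=
  #|T| = 3 /\ (forall a b, a \in T -> b \in T -> a != b -> e a b).

Definition is_pair (n : nat) (a b u w : 'I_n) : bool :=
  ((u == a) && (w == b)) || ((u == b) && (w == a)).

Definition switched (n : nat) (e : rel 'I_n) (b2 b1 x b3 b4 : 'I_n) : rel 'I_n :=
  fun u w =>
    (e u w && ~~ is_pair b1 b2 u w && ~~ is_pair b3 b4 u w)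
    || is_pair b1 b3 u w || is_pair b2 b4 u w.

Definition tswitch (n : nat) (e : rel 'I_n) (b2 b1 x b3 b4 : 'I_n) : Prop :=
  uniq [:: b2; b1; x; b3; b4] /\
  e b2 b1 /\ e b1 x /\ e x b3 /\ e b3 b4 /\
  ~~ e b1 b3 /\ ~~ e b2 b4.

Definition cycle4_through (n : nat) (e : rel 'I_n) (a v c : 'I_n) : Prop :=
  exists w, uniq [:: a; v; c; w] /\ e a v /\ e v c /\ e c w /\ e w a.

Definition cycle5_through (n : nat) (e : rel 'I_n) (a v c : 'I_n) : Prop :=
  exists w1 w2, uniq [:: a; v; c; w1; w2] /\
    e a v /\ e v c /\ e c w1 /\ e w1 w2 /\ e w2 a.

(* Main.v *)
Require Import Defs.
From mathcomp Require Import all_boot.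

Lemma sw_tri n (e : rel 'I_n) b2 b1 x b3 b4 : simple_graph e ->
  tswitch e b2 b1 x b3 b4 -> is_triangle (switched e b2 b1 x b3 b4) [set x; b1; b3].
Proof.
move=> [sym irr] [U [e21 [e1x [ex3 [e34 [n13 n24]]]]]].
move: U; rewrite /= !inE !negb_or => /and5P[/and4P[d21 d2x d23 d24] /and3P[d1x d13 d14]
  /andP[dx3 dx4] d34 _].
have ne : forall a b : 'I_n, a != b -> (a == b) = false /\ (b == a) = false.
  by move=> a b /negbTE H; split; last rewrite eq_sym.
case: (ne _ _ d21) => f1 f2; case: (ne _ _ d2x) => f3 f4; case: (ne _ _ d23) => f5 f6.
case: (ne _ _ d24) => f7 f8; case: (ne _ _ d1x) => f9 f10; case: (ne _ _ d13) => f11 f12.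
case: (ne _ _ d14) => f13 f14; case: (ne _ _ dx3) => f15 f16; case: (ne _ _ dx4) => f17 f18.
case: (ne _ _ d34) => f19 f20.
split.
  rewrite -setUA cardsU1 cards2 !inE f10 f15 d13. by [].
move=> a b; rewrite !inE => /orP[/orP[]|] /eqP-> /orP[/orP[]|] /eqP->;
  rewrite ?eqxx //= => _; rewrite /switched /is_pair
  ?f1 ?f2 ?f3 ?f4 ?f5 ?f6 ?f7 ?f8 ?f9 ?f10 ?f11 ?f12 ?f13 ?f14 ?f15 ?f16 ?f17 ?f18 ?f19 ?f20
  ?eqxx /= ?andbT ?orbT //.
- by rewrite sym e1x.
- by rewrite ex3.
- by rewrite e1x.
- by rewrite sym ex3.
Qed.

From Stdlib Require Import Classical_Prop.
Set Implicit Arguments.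

Definition Good n (e : rel 'I_n) (v r : 'I_n) := exists b2 b1 x b3 b4,
  tswitch e b2 b1 x b3 b4 /\ exists T : {set 'I_n},
  is_triangle (switched e b2 b1 x b3 b4) T /\ v \in T /\ r \in T.

Lemma mk_good n (e : rel 'I_n) b2 b1 x b3 b4 v r : simple_graph e ->
  tswitch e b2 b1 x b3 b4 -> v \in [set x; b1; b3] -> r \in [set x; b1; b3] ->
  Good e v r.
Proof.
move=> sg ts vT rT; exists b2, b1, x, b3, b4; split => //.
by exists [set x; b1; b3]; split => //; apply: sw_tri.
Qed.

Lemma other_nb n (e : rel 'I_n) (r v : 'I_n) : 1 < deg e r -> exists2 s, e r s & s != v.
Proof.
move=> H.
case: (pickP [pred s | e r s && (s != v)]) => [s /andP[] ? ?|H0]; first by exists s.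
exfalso.
have : [set w | e r w] \subset [set v].
  apply/subsetP=> w; rewrite !inE => ew.
  by move: (H0 w) => /=; rewrite ew /= => /negbFE.
move/subset_leq_card; rewrite cards1 => H1.
by move: H; rewrite /deg ltnNge H1.
Qed.

Ltac clos :=
  match goal with
  | H : is_true (?e ?a ?a), I : irreflexive ?e |- _ => by rewrite I in H
  | H : is_true (?e ?a ?b), H' : is_true (~~ ?e ?a ?b) |- _ => by rewrite H in H'
  | S : symmetric ?e, H : is_true (?e ?a ?b), H' : is_true (~~ ?e ?b ?a) |- _ =>
      by rewrite S H in H'
  | H : is_true (?a != ?a) |- _ => by rewrite eqxx in H
  end.

Ltac neq := apply/eqP => E; subst; clos.

Ltac uniqt := rewrite /= !inE !negb_or /= ?andbT;
  repeat (apply/andP; split); neq.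

Ltac edg := first [done | match goal with S : symmetric _ |- _ => by rewrite S end].

Ltac fin := first [done | match goal with S : symmetric _ |- _ => by rewrite S end
  | by rewrite eq_sym | by rewrite !inE eqxx ?orbT].

Ltac tsw := split; [uniqt | repeat split; edg].


Theorem lemma2 (n : nat) (e : rel 'I_n) (v r1 r2 r3 : 'I_n) :
  simple_graph e ->
  uniq [:: r1; r2; r3] ->
  e v r1 -> e v r2 -> e v r3 ->
  1 < deg e r1 -> 1 < deg e r2 -> 1 < deg e r3 ->
  (forall T : {set 'I_n}, is_triangle e T ->
     ~ (v \in T /\ (r1 \in T \/ r2 \in T \/ r3 \in T))) ->
  (* (i) *)
  (exists b2 b1 x b3 b4, tswitch e b2 b1 x b3 b4 /\
     exists T : {set 'I_n}, is_triangle (switched e b2 b1 x b3 b4) T /\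
       v \in T /\ (r1 \in T \/ r2 \in T \/ r3 \in T)) /\
  (* (ii) *)
  (~ (forall j, j \in [:: r2; r3] ->
        cycle5_through e r1 v j /\ ~ cycle4_through e r1 v j) ->
   exists b2 b1 x b3 b4, tswitch e b2 b1 x b3 b4 /\
     exists T : {set 'I_n}, is_triangle (switched e b2 b1 x b3 b4) T /\
       v \in T /\ r1 \in T).
Proof.
move=> sg U vr1 vr2 vr3 d1 d2 d3 Hno.
have [sym irr] := sg.
move: U; rewrite /= !inE !negb_or => /andP[/andP[d12 d13] /andP[d23 _]].
have NT : forall a b, e v a -> e v b -> e a b -> a \in [:: r1; r2; r3] -> False.
  move=> a b va vb ab aR; apply: (Hno [set v; a; b]); split.
      rewrite -setUA cardsU1 cards2 !inE negb_or.
      have -> : v != a by neq.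
      have -> : v != b by neq.
      have -> : a != b by neq.
      by [].
    move=> x y; rewrite !inE => /orP[/orP[]|] /eqP-> /orP[/orP[]|] /eqP->;
      rewrite ?eqxx //= => _; edg.
  by rewrite !inE eqxx ?orbT.
  move: aR; rewrite !inE => /or3P[] /eqP->;
   [left|right;left|right;right]; by rewrite ?inE eqxx ?orbT.
have n12 : ~~ e r1 r2 by apply/negP => h; apply: (NT r1 r2) => //; rewrite !inE eqxx.
have n13 : ~~ e r1 r3 by apply/negP => h; apply: (NT r1 r3) => //; rewrite !inE eqxx.
have n23 : ~~ e r2 r3 by apply/negP => h; apply: (NT r2 r3) => //; rewrite !inE eqxx ?orbT.
have CA : forall ri rj rk w, e v ri -> e v rj -> e v rk -> ri != rj -> ri != rk ->
    rj != rk -> e ri w -> e rj w -> w != v -> ~~ e rk rj -> ~~ e ri rk ->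
    ri \in [:: r1; r2; r3] -> Good e v ri.
  move=> ri rj rk w vri vrj vrk dij dik djk iw jw wv nkj nik riR.
  have nvw : ~~ e v w by apply/negP => h; apply: (NT ri w).
  apply: (@mk_good _ _ rk v ri w rj) => //; last by rewrite !inE eqxx ?orbT.
  tsw.
  by rewrite !inE eqxx ?orbT.
have PS : forall ri rj si sj, e v ri -> e v rj -> ri != rj -> ~~ e ri rj ->
    e ri si -> e rj sj -> si != v -> sj != v -> ~~ e v si -> ~~ e v sj ->
    si != sj -> ~~ e si sj -> Good e v ri.
  move=> ri rj si sj vri vrj dij nij isi jsj siv sjv nvi nvj dss nss.
  apply: (@mk_good _ _ si ri v rj sj) => //; last by rewrite !inE eqxx ?orbT.
  tsw.
  by rewrite !inE eqxx ?orbT.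
have [s1 e1s1 s1v] := @other_nb _ e _ v d1.
have [s2 e2s2 s2v] := @other_nb _ e _ v d2.
have nv1 : ~~ e v s1 by apply/negP => h; apply: (NT r1 s1) => //; rewrite !inE eqxx.
have nv2 : ~~ e v s2 by apply/negP => h; apply: (NT r2 s2) => //; rewrite !inE eqxx ?orbT.
have toI : forall r, r \in [:: r1; r2; r3] -> Good e v r ->
  (exists b2 b1 x b3 b4, tswitch e b2 b1 x b3 b4 /\
     exists T : {set 'I_n}, is_triangle (switched e b2 b1 x b3 b4) T /\
       v \in T /\ (r1 \in T \/ r2 \in T \/ r3 \in T)).
  move=> r rR [b2 [b1 [x [b3 [b4 [ts [T [tT [vT rT]]]]]]]]].
  exists b2, b1, x, b3, b4; split => //; exists T; split => //; split => //.
  by move: rR; rewrite !inE => /or3P[]/eqP Er; subst r; auto.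
split.
  case: (eqVneq s1 s2) => [E|d12s].
    subst s2; apply: (toI r1); first by rewrite !inE eqxx.
    by apply: (CA r1 r2 r3 s1); fin.
  case E12: (e s1 s2).
    case E23: (e s2 r3).
      apply: (toI r2); first by rewrite !inE eqxx ?orbT.
      by apply: (CA r2 r3 r1 s2); fin.
    apply: (toI r1); first by rewrite !inE eqxx.
    move/negbT: E23 => E23.
    apply: (@mk_good _ _ s2 s1 r1 v r3) => //; last by rewrite !inE eqxx ?orbT.
      by tsw.
    by rewrite !inE eqxx ?orbT.
  apply: (toI r1); first by rewrite !inE eqxx.
  apply: (PS r1 r2 s1 s2); try fin. by move/negbT: E12.
have L : forall rj rk, e v rj -> e v rk -> r1 != rj -> r1 != rk -> rj != rk ->
    ~~ e r1 rj -> ~~ e r1 rk -> ~~ e rk rj -> 1 < deg e rj ->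
    rj \in [:: r1; r2; r3] -> ~ Good e v r1 ->
    cycle5_through e r1 v rj /\ ~ cycle4_through e r1 v rj.
  move=> rj rk vj vk d1j d1k djk n1j n1k nkj dj rjR nG.
  have [sj ejs sjv] := @other_nb _ e _ v dj.
  have nvj : ~~ e v sj by apply/negP => h; apply: (NT rj sj).
  have C4G : ~ cycle4_through e r1 v rj.
    move=> [w [Uw [_ [_ [jw w1]]]]].
    have wv : w != v.
      apply/eqP => E; subst w.
      by move: Uw; rewrite /= !inE eqxx !orbT /= !andbF.
    by apply: nG; apply: (CA r1 rj rk w); fin.
  split; last exact: C4G.
  case: (eqVneq s1 sj) => [E|dss].
    by subst sj; exfalso; apply: nG; apply: (CA r1 rj rk s1); fin.
  have [Es|Es] := boolP (e s1 sj).
    exists sj, s1; split; [uniqt | repeat split; edg].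
  by exfalso; apply: nG; apply: (PS r1 rj s1 sj); fin.
move=> Hii; apply: NNPP => nG; apply: Hii => j.
rewrite !inE => /orP[]/eqP->.
  by apply: (L r2 r3); fin.
by apply: (L r3 r2); fin.
Qed.
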